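(* Let $k$ be a difference field and $D$ a finitely generated difference $k$-algebra which is an integral domain. Then for some $n$, $\sigma^n(D)$ is a difference domain (i.e. $\sigma$ is injective on $\sigma^n(D)$). In fact, if $R$ is a finitely generated $k$-subalgebra of $D$ generating $D$ as a difference ring, and $b$ is the dimension growth degree of $D$ with respect to $R$, then one can take $n\le b$.
   Context: A difference $k$-algebra is a $k$-algebra with an endomorphism $\sigma$ extending that of $k$. For $R$ as in the statement, let $R_m$ be the subring of $D$ generated by $R\cup\sigma(R)\cup\dots\cup\sigma^{m-1}(R)$ and $c(m)$ the transcendence degree over $k$ of its fraction field; there are integers $a,b$ with $c(m)=am+b$ for all sufficiently large $m$, and $b$ is called the dimension growth degree. *)

(* Defs.v *)
From HB Require Import structures.
From mathcomp Require Import all_boot all_order all_algebra.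
From mathcomp Require Import mpoly.
Set Implicit Arguments. Unset Strict Implicit. Unset Printing Implicit Defensive.
Import Order.TTheory GRing.Theory Num.Theory.
Local Open Scope ring_scope.

Section DiffAlg.
Variables (k : fieldType) (D : idomainType) (iota : {rmorphism k -> D}).
Variable (sig : D -> D).

Definition is_subring (S : D -> Prop) : Prop :=
  [/\ S 0, S 1, (forall x y, S x -> S y -> S (x - y)) &
      (forall x y, S x -> S y -> S (x * y))].

Definition subring_gen (A : D -> Prop) : D -> Prop :=
  fun x => forall S, is_subring S -> (forall a, A a -> S a) -> S x.

Definition dsubring_gen (A : D -> Prop) : D -> Prop :=
  fun x => forall S, is_subring S -> (forall a, A a -> S a) ->
    (forall y, S y -> S (sig y)) -> S x.

Definition ksubalg_gen (g : seq D) : D -> Prop :=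
  subring_gen (fun x => (exists c, x = iota c) \/ x \in g).

Definition fg_ksubalg (R : D -> Prop) : Prop :=
  exists g : seq D, forall x, R x <-> ksubalg_gen g x.

Definition Rm (R : D -> Prop) (m : nat) : D -> Prop :=
  subring_gen (fun x => exists j, (j < m)%N /\ exists y, R y /\ x = iter j sig y).

Definition alg_indep (n : nat) (x : 'I_n -> D) : Prop :=
  forall p : {mpoly k[n]}, mmap iota x p = 0 -> p = 0.

(* The transcendence degree over k of the fraction field of the subring S
   (a domain containing k) equals d: maximal size of an algebraically
   independent family of elements of S. *)
Definition trdeg_eq (S : D -> Prop) (d : nat) : Prop :=
  (exists x : 'I_d -> D, (forall i, S (x i)) /\ alg_indep x) /\
  (forall x : 'I_d.+1 -> D, (forall i, S (x i)) -> ~ alg_indep x).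

Definition dim_growth (R : D -> Prop) (a b : int) : Prop :=
  exists M : nat, forall m : nat, (M <= m)%N ->
    exists d : nat, trdeg_eq (Rm R m) d /\ d%:Z = a * m%:Z + b.

Definition inj_on_iter (n : nat) : Prop :=
  forall x y, sig (iter n sig x) = sig (iter n sig y) -> iter n sig x = iter n sig y.

End DiffAlg.

(* Main.v *)
Require Import Defs.
From HB Require Import structures.
From mathcomp Require Import all_boot all_order all_algebra.
From mathcomp Require Import mpoly.
From mathcomp Require Import ring zify.
From Stdlib Require Import Classical IndefiniteDescription.
Import Order.TTheory GRing.Theory Num.Theory.
Local Open Scope ring_scope.
Set Implicit Arguments. Unset Strict Implicit. Unset Printing Implicit Defensive.
Section Lin.
Variables (k : fieldType) (D : idomainType) (iota : {rmorphism k -> D}).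

Inductive spn (P : D -> Prop) : D -> Prop :=
| spn0 : spn P 0
| spnS c z v : P z -> spn P v -> spn P (iota c * z + v).

Lemma spn_sub (P Q : D -> Prop) v : (forall z, P z -> Q z) -> spn P v -> spn Q v.
Proof. by move=> PQ; elim=> [|c z w Pz _ IH]; [exact: spn0|apply: spnS; auto]. Qed.

Lemma spn1 (P : D -> Prop) z : P z -> spn P z.
Proof. by move=> Pz; rewrite -[z]addr0 -[z]mul1r -(rmorph1 iota); apply: spnS => //; apply: spn0. Qed.

Lemma spnD P v w : spn P v -> spn P w -> spn P (v + w).
Proof.
move=> hv hw; elim: hv => [|c z u Pz _ IH]; first by rewrite add0r.
by rewrite -addrA; apply: spnS.
Qed.

Lemma spnZ P c v : spn P v -> spn P (iota c * v).
Proof.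
elim=> [|c' z u Pz _ IH]; first by rewrite mulr0; apply: spn0.
by rewrite mulrDr mulrA -rmorphM; apply: spnS.
Qed.

Lemma spnN P v : spn P v -> spn P (- v).
Proof. by move=> h; rewrite -mulN1r -(rmorphN1 iota); apply: spnZ. Qed.

Lemma spnB P v w : spn P v -> spn P w -> spn P (v - w).
Proof. by move=> hv hw; apply: spnD => //; apply: spnN. Qed.

Lemma spn_sum P (I : eqType) (r : seq I) (F : I -> D) :
  (forall i, i \in r -> spn P (F i)) -> spn P (\sum_(i <- r) F i).
Proof.
elim: r => [|a r IH] H; first by rewrite big_nil; apply: spn0.
rewrite big_cons; apply: spnD; first by apply: H; rewrite inE eqxx.
by apply: IH => i ri; apply: H; rewrite inE ri orbT.
Qed.

Lemma spn_mulL P Q a v : (forall z, P z -> spn Q (a * z)) -> spn P v -> spn Q (a * v).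
Proof.
move=> H; elim=> [|c z u Pz _ IH]; first by rewrite mulr0; apply: spn0.
by rewrite mulrDr mulrCA; apply: spnD => //; apply: spnZ; apply: H.
Qed.

Lemma spnM P Q S v w : (forall p q, P p -> Q q -> spn S (p * q)) ->
  spn P v -> spn Q w -> spn S (v * w).
Proof.
move=> H hv hw; elim: hv => [|c z u Pz _ IH]; first by rewrite mul0r; apply: spn0.
rewrite mulrDl -mulrA; apply: spnD => //; apply: spnZ.
by apply: spn_mulL hw => q Qq; apply: H.
Qed.

Lemma spn_fin P (ws : seq D) v : (forall z, P z -> z \in ws) -> spn P v ->
  exists c : 'I_(size ws) -> k, v = \sum_(i < size ws) iota (c i) * ws`_i.
Proof.
move=> H; elim=> [|c z u Pz _ [cu ->]].
  by exists (fun _ => 0); rewrite big1 // => i _; rewrite rmorph0 mul0r.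
have zi := H z Pz; have lt : (index z ws < size ws)%N by rewrite index_mem.
exists (fun i => cu i + (if val i == index z ws then c else 0)).
under [RHS]eq_bigr => i _ do rewrite rmorphD mulrDl.
rewrite big_split /= addrC; congr (_ + _).
rewrite (bigD1 (Ordinal lt)) //= eqxx nth_index // big1 ?addr0 // => i ne.
have -> : (val i == index z ws) = false.
  by apply/negbTE; apply: contra ne => /eqP e; apply/eqP/val_inj.
by rewrite rmorph0 mul0r.
Qed.

Lemma spn_map (sig : {rmorphism D -> D}) (sigk : {rmorphism k -> k}) P v :
  (forall c, sig (iota c) = iota (sigk c)) ->
  spn P v -> spn (fun z => exists z', P z' /\ z = sig z') (sig v).
Proof.
move=> hext; elim=> [|c z u Pz _ IH]; first by rewrite rmorph0; apply: spn0.
by rewrite rmorphD rmorphM hext; apply: spnS => //; exists z.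
Qed.

Lemma steinitz (T : eqType) (L : seq T) (v : T -> D) (ws : seq D) :
  uniq L -> (size ws < size L)%N ->
  (forall t, t \in L -> spn (fun z => z \in ws) (v t)) ->
  exists c : T -> k, (exists2 t, t \in L & c t != 0) /\
     \sum_(t <- L) iota (c t) * v t = 0.
Proof.
move=> uL ltL H.
have t0 : T by move: ltL; case: (L) => [|t ?].
have : forall i : 'I_(size L), exists r : 'I_(size ws) -> k,
    v (nth t0 L i) = \sum_(j < size ws) iota (r j) * ws`_j.
  move=> i; apply: spn_fin (H _ _) => //; by rewrite mem_nth.
case/fin_all_exists => r hr.
pose A : 'M[k]_(size L, size ws) := \matrix_(i, j) r i j.
have nf : ~~ row_free A.
  rewrite /row_free; apply/negP => /eqP e.
  by move: (rank_leq_col A); rewrite e leqNgt ltL.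
have : kermx A != 0 by rewrite kermx_eq0.
case/eqP/matrixP/not_all_ex_not => i /not_all_ex_not [j ne].
pose u := row i (kermx A).
have uA : u *m A = 0 by rewrite /u -row_mul mulmx_ker row0.
exists (fun t => u 0 (insubd j (index t L) : 'I_(size L))).
split.
  exists (nth t0 L j); first by rewrite mem_nth.
  rewrite index_uniq // valKd /u mxE.
  by apply/eqP => e; apply: ne; rewrite e mxE.
rewrite (big_nth t0) big_mkord.
transitivity (\sum_(i0 < size L) iota (u 0 i0) * v (nth t0 L i0)).
  apply: eq_bigr => i0 _; congr (iota (u 0 _) * _).
  by rewrite index_uniq // valKd.
under eq_bigr => i0 _ do rewrite hr mulr_sumr.
rewrite exchange_big /=; apply: big1 => j0 _.
under eq_bigr => i0 _ do rewrite mulrA.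
rewrite -big_distrl /=; apply/eqP; rewrite mulf_eq0; apply/orP; left.
apply/eqP; transitivity (iota ((u *m A) 0 j0)); last by rewrite uA mxE rmorph0.
rewrite mxE rmorph_sum; apply: eq_bigr => i1 _ /=.
by rewrite rmorphM /A mxE.
Qed.

End Lin.
Section Mon.
Variables (k : fieldType) (D : idomainType) (iota : {rmorphism k -> D}).

Definition monof (s : seq D) (f : nat -> nat) := \prod_(0 <= i < size s) s`_i ^+ f i.
Definition mono (s : seq D) (g : seq nat) := monof s (nth 0%N g).

Lemma monof_ext s f g : (forall i, (i < size s)%N -> f i = g i) -> monof s f = monof s g.
Proof. by move=> H; apply: eq_big_nat => i /andP [_ lt]; rewrite H. Qed.

Lemma monofD s f g : monof s (fun i => f i + g i)%N = monof s f * monof s g.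
Proof. by rewrite /monof -big_split /=; apply: eq_bigr => i _; rewrite exprD. Qed.

Lemma monof0 s : monof s (fun _ => 0%N) = 1.
Proof. by rewrite /monof big1 // => i _; rewrite expr0. Qed.

Lemma monof_cons a s f : monof (a :: s) f = a ^+ f 0%N * monof s (fun i => f i.+1).
Proof. by rewrite /monof /= big_nat_recl. Qed.

Lemma monof_unit s j : (j < size s)%N -> monof s (fun i => (i == j) : nat) = s`_j.
Proof.
move=> lt; rewrite /monof big_mkord (bigD1 (Ordinal lt)) //= eqxx expr1 big1 ?mulr1 //.
move=> i ne; have -> : (val i == j) = false; last by rewrite expr0.
by apply/negbTE; apply: contra ne => /eqP e; apply/eqP/val_inj.
Qed.

Lemma monof_upd s f j : (j < size s)%N ->
  monof s f = s`_j ^+ f j * monof s (fun i => if i == j then 0%N else f i).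
Proof.
move=> lt; rewrite /monof !big_mkord (bigD1 (Ordinal lt)) //= [X in _ = _ * X](bigD1 (Ordinal lt)) //=.
rewrite eqxx expr0 mul1r; congr (_ * _); apply: eq_bigr => i ne.
have -> : (val i == j) = false; last by [].
by apply/negbTE; apply: contra ne => /eqP e; apply/eqP/val_inj.
Qed.

Lemma monof_map (sig : {rmorphism D -> D}) s f :
  sig (monof s f) = monof (map sig s) f.
Proof.
rewrite /monof rmorph_prod size_map; apply: eq_big_nat => i /andP [_ lt].
by rewrite rmorphXn (nth_map 0).
Qed.

Fixpoint boxes (n B : nat) : seq (seq nat) :=
  if n is n'.+1 then [seq i :: g | i <- seq.iota 0 B, g <- boxes n' B] else [:: [::]].

Lemma size_boxes n B : size (boxes n B) = (B ^ n)%N.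
Proof. by elim: n => [|n IH] //=; rewrite size_allpairs size_iota IH expnS. Qed.

Lemma uniq_boxes n B : uniq (boxes n B).
Proof.
elim: n => [|n IH] //=; apply: allpairs_uniq => //; first exact: iota_uniq.
by move=> [a b] [c d] _ _ [-> ->].
Qed.

Lemma mem_boxes n B g : (g \in boxes n B) = (size g == n) && all (fun i => i < B)%N g.
Proof.
elim: n g => [|n IH] [|a g] //=.
- by apply/negbTE/allpairsP => -[[x y] [_ _]].
apply/allpairsP/idP => [[[x y] /= [hx hy [-> ->]]]|/andP [sz /andP [ha hg]]].
  move: hx hy; rewrite mem_iota add0n IH /= => hx /andP [/eqP -> ->].
  by rewrite eqxx hx.
by exists (a, g); rewrite mem_iota add0n ha IH; split => //; rewrite hg andbT.
Qed.

Definition Ind (s : seq D) := forall (L : seq (seq nat)) (c : seq nat -> k),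
  uniq L -> (forall g, g \in L -> size g = size s) ->
  \sum_(g <- L) iota (c g) * mono s g = 0 -> forall g, g \in L -> c g = 0.

Definition fam (d : nat) (x : 'I_d -> D) : seq D := [seq x i | i <- enum 'I_d].

Lemma size_fam d (x : 'I_d -> D) : size (fam x) = d.
Proof. by rewrite size_map size_enum_ord. Qed.

Lemma nth_fam d (x : 'I_d -> D) (i : 'I_d) : (fam x)`_i = x i.
Proof. by rewrite (nth_map i) ?size_enum_ord // nth_ord_enum. Qed.

Lemma mono_fam d (x : 'I_d -> D) g : mono (fam x) g = \prod_(i < d) x i ^+ nth 0%N g i.
Proof. by rewrite /mono /monof size_fam big_mkord; apply: eq_bigr => i _; rewrite nth_fam. Qed.

Definition mnm_of d (g : seq nat) : 'X_{1..d} := [multinom nth 0%N g i | i < d].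

Lemma alg_indep_Ind d (x : 'I_d -> D) : alg_indep iota x -> Ind (fam x).
Proof.
move=> ai L c uL szL rel g gL.
pose p : {mpoly k[d]} := \sum_(g <- L) c g *: 'X_[mnm_of d g].
have hp : mmap iota x p = 0.
  rewrite -[RHS]rel /p raddf_sum /=; apply: eq_bigr => g' _.
  by rewrite mmapZ mmapX mono_fam /mmap1; congr (_ * _); apply: eq_bigr => i _; rewrite mnmE.
have := ai p hp => /(congr1 (mcoeff (mnm_of d g))).
rewrite /p raddf_sum mcoeff0 /= => e; rewrite -[RHS]e.
rewrite (bigD1_seq g) //= mcoeffZ mcoeffX eqxx mulr1 big_seq_cond big1 ?addr0 // => g' /andP [g'L ne].
rewrite mcoeffZ mcoeffX; case: eqP => [/mnmP E|]; last by rewrite mulr0.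
case/negP: ne; apply/eqP; apply: (@eq_from_nth _ 0%N); first by rewrite !szL.
move=> i; rewrite szL // size_fam => lt; have := E (Ordinal lt); by rewrite !mnmE.
Qed.

Lemma Ind_alg_indep d (x : 'I_d -> D) : Ind (fam x) -> alg_indep iota x.
Proof.
move=> hI p hp; apply/eqP/negPn/negP => pn0.
pose sq (m : 'X_{1..d}) : seq nat := [seq m i | i <- enum 'I_d].
have sqK m : mnm_of d (sq m) = m.
  by apply/mnmP => i; rewrite mnmE (nth_map i) ?size_enum_ord // nth_ord_enum.
have sq_inj : injective sq by move=> m1 m2 e; rewrite -(sqK m1) e sqK.
have := hI [seq sq m | m <- msupp p] (fun g => p@_(mnm_of d g)).
rewrite map_inj_uniq // msupp_uniq big_map => /(_ isT).
have -> : \sum_(m <- msupp p) iota p@_(mnm_of d (sq m)) * mono (fam x) (sq m) = mmap iota x p.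
  rewrite /mmap; apply: eq_bigr => m _; rewrite sqK mono_fam /mmap1; congr (_ * _).
  by apply: eq_bigr => i _; rewrite (nth_map i) ?size_enum_ord // nth_ord_enum.
move=> /(_ _ hp) H; case/negP: pn0; apply/eqP; rewrite [p]mpolyE big_seq big1 // => m mp.
have := H _ (sq m); rewrite sqK => -> //; first by rewrite scale0r.
  by move=> g /mapP [m' _ ->]; rewrite size_map size_enum_ord size_fam.
by apply/mapP; exists m.
Qed.

End Mon.
Section Core.
Variables (k : fieldType) (D : idomainType) (iota : {rmorphism k -> D}).
Local Notation spn := (spn iota).
Local Notation Ind := (Ind iota).
Implicit Types (s G u : seq D) (h g v z a : D).

Definition bnd (n : nat) (f : nat -> nat) (T : nat) := forall i, (i < n)%N -> (f i < T)%N.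

Definition XS s := spn (fun z => exists f, z = monof s f).
Definition XSb s K := spn (fun z => exists f, bnd (size s) f K /\ z = monof s f).
Definition alg_rel s h E g :=
  spn (fun z => exists p i, XS s p /\ (i < E)%N /\ z = p * g ^+ i) (h * g ^+ E).
Definition algo s g := exists h E, h != 0 /\ XS s h /\ alg_rel s h E g.
Definition deg (G : seq D) (f : nat -> nat) := (\sum_(0 <= j < size G) f j)%N.
Definition Gmon G d z := exists f, (deg G f <= d)%N /\ z = monof G f.
Definition Poly G z := exists d, spn (Gmon G d) z.

Lemma XS1 s : XS s 1.
Proof. by apply: spn1; exists (fun _ => 0%N); rewrite monof0. Qed.

Lemma XSM s a b : XS s a -> XS s b -> XS s (a * b).
Proof.
move=> ha hb; apply: spnM ha hb => p q [f ->] [f' ->].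
by apply: spn1; exists (fun i => f i + f' i)%N; rewrite monofD.
Qed.

Lemma alg_rel_mono s a h E b g : XS s a -> alg_rel s h E g -> alg_rel s (a * h) (E + b) g.
Proof.
move=> ha hr; rewrite /alg_rel.
have -> : a * h * g ^+ (E + b) = (a * g ^+ b) * (h * g ^+ E).
  by rewrite exprD; ring.
apply: spn_mulL hr => z [p [i [hp [hi ->]]]]; apply: spn1.
exists (a * p), (i + b)%N; split; first exact: XSM.
split; first by rewrite ltn_add2r.
by rewrite exprD; ring.
Qed.

Lemma uniformize s G : (forall g, g \in G -> algo s g) ->
  exists h E, [/\ h != 0, XS s h, (0 < E)%N & forall g, g \in G -> alg_rel s h E g].
Proof.
elim: G => [|g G IH] H.
  exists 1, 1%N; split => //; [exact: oner_neq0 | exact: XS1].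
have [h [E [hn0 hX E0 hG]]] := IH (fun g' g'G => H g' ltac:(by rewrite inE g'G orbT)).
have [h1 [E1 [h1n0 [h1X h1r]]]] := H g (mem_head _ _).
exists (h1 * h), (E + E1)%N; split.
- by rewrite mulf_neq0.
- exact: XSM.
- by rewrite ltn_addr.
move=> g'; rewrite inE => /orP [/eqP ->|g'G].
  by rewrite mulrC addnC; apply: alg_rel_mono.
exact: alg_rel_mono (hG _ g'G).
Qed.

Lemma XSb_mono s K K' v : (K <= K')%N -> XSb s K v -> XSb s K' v.
Proof.
move=> le; apply: spn_sub => z [f [hf ->]]; exists f; split => // i lt.
exact: leq_trans (hf i lt) le.
Qed.

Lemma XS_bnd s v : XS s v -> exists K, XSb s K v.
Proof.
elim=> [|c z u [f ->] _ [K hK]]; first by exists 0%N; apply: spn0.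
pose K1 := (\sum_(0 <= i < size s) f i).+1.
exists (K + K1)%N; apply: spnS.
  exists f; split => // i lt; apply: leq_trans (leq_addl K _).
  by rewrite ltnS /K1 big_mkord (bigD1 (Ordinal lt)) //= leq_addr.
by apply: XSb_mono hK; apply: leq_addr.
Qed.

Definition relb s K E g h :=
  spn (fun z => exists f i, bnd (size s) f K /\ (i < E)%N /\ z = monof s f * g ^+ i) (h * g ^+ E).

Lemma relb_mono s K K' E g h : (K <= K')%N -> relb s K E g h -> relb s K' E g h.
Proof.
move=> le; apply: spn_sub => z [f [i [hf [hi ->]]]]; exists f, i; split => //.
by move=> j lt; exact: leq_trans (hf j lt) le.
Qed.

Lemma alg_rel_bnd s h E g : alg_rel s h E g -> exists K, relb s K E g h.
Proof.
rewrite /alg_rel /relb; elim: (h * g ^+ E) / => [|c z u [p [i [hp [hi ->]]]] _ [K hK]].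
  by exists 0%N; apply: spn0.
have [K1 hK1] := XS_bnd hp.
exists (K + K1)%N; apply: spnD; last by apply: spn_sub hK => z' [f [i' [hf [hi' ->]]]]; exists f, i'; split => // j lt; exact: leq_trans (hf j lt) (leq_addr _ _).
apply: spnZ; rewrite mulrC; apply: spn_mulL hK1 => z' [f [hf ->]]; apply: spn1.
exists f, i; split; last by rewrite mulrC.
by move=> j lt; exact: leq_trans (hf j lt) (leq_addl _ _).
Qed.

Lemma uniform_bnd s G h E : XS s h -> (forall g, g \in G -> alg_rel s h E g) ->
  exists K, XSb s K h /\ forall g, g \in G -> relb s K E g h.
Proof.
move=> hX; elim: G => [|g G IH] H.
  by have [K hK] := XS_bnd hX; exists K; split.
have [K [hK hG]] := IH (fun g' g'G => H g' ltac:(by rewrite inE g'G orbT)).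
have [K1 hK1] := alg_rel_bnd (H g (mem_head _ _)).
exists (K + K1)%N; split; first by apply: XSb_mono hK; apply: leq_addr.
move=> g'; rewrite inE => /orP [/eqP ->|g'G].
  by apply: relb_mono hK1; apply: leq_addl.
by apply: relb_mono (hG _ g'G); apply: leq_addr.
Qed.

End Core.
Section Core2.
Variables (k : fieldType) (D : idomainType) (iota : {rmorphism k -> D}).
Local Notation spn := (spn iota).
Local Notation Ind := (Ind iota).
Local Notation XSb := (XSb iota).
Local Notation relb := (relb iota).
Implicit Types (s G u : seq D) (h g v z a : D).

Variables (s G : seq D) (h : D) (K E : nat).
Hypotheses (hK : XSb s K h) (E0 : (0 < E)%N) (hrel : forall j, (j < size G)%N -> relb s K E G`_j h).

Definition W T := spn (fun z => exists f f', [/\ bnd (size s) f T, bnd (size G) f' E &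
   z = monof s f * monof G f']).

Lemma W_mono T T' v : (T <= T')%N -> W T v -> W T' v.
Proof.
move=> le; apply: spn_sub => z [f [f' [hf hf' ->]]]; exists f, f'; split => //.
by move=> i lt; exact: leq_trans (hf i lt) le.
Qed.

Lemma W_h T v : W T v -> W (T + K) (h * v).
Proof.
move=> hv; apply: spn_mulL hv => z [f [f' [hf hf' ->]]].
rewrite mulrC; apply: spn_mulL hK => z' [f2 [hf2 ->]]; apply: spn1.
exists (fun i => f2 i + f i)%N, f'; split => //.
  by move=> i lt; have := hf i lt; have := hf2 i lt; lia.
rewrite monofD; ring.
Qed.

Lemma W_red T j v : (j < size G)%N -> W T v -> W (T + K) (h * G`_j * v).
Proof.
move=> lt hv; apply: spn_mulL hv => z [f [f' [hf hf' ->]]].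
case: (ltnP (f' j).+1 E) => hE.
  pose f'' := fun i => if i == j then (f' j).+1 else f' i.
  have -> : h * G`_j * (monof s f * monof G f') = h * (monof s f * monof G f'').
    rewrite (monof_upd _ lt) [monof G f''](monof_upd _ lt) /f'' eqxx exprS.
    have -> : monof G (fun i => if i == j then 0%N else if i == j then (f' j).+1 else f' i) =
              monof G (fun i => if i == j then 0%N else f' i).
      by apply: monof_ext => i _; case: (i == j).
    ring.
  apply: W_h; apply: spn1; exists f, f''; split => // i li.
  by rewrite /f''; case: (i == j) => //; exact: hf'.
have ej : (f' j).+1 = E by apply/eqP; rewrite eqn_leq hE hf'.
pose f0 := fun i => if i == j then 0%N else f' i.
have -> : h * G`_j * (monof s f * monof G f') = (monof s f * monof G f0) * (h * G`_j ^+ E).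
  rewrite (monof_upd _ lt) -ej exprS; ring.
apply: spn_mulL (hrel lt) => z2 [f2 [i [hf2 [hi ->]]]]; apply: spn1.
exists (fun i => f2 i + f i)%N, (fun i' => if i' == j then i else f' i'); split.
- by move=> i' li; have := hf i' li; have := hf2 i' li; lia.
- by move=> i' li; case: (i' == j) => //; exact: hf'.
have -> : monof G (fun i' => if i' == j then i else f' i') = G`_j ^+ i * monof G f0.
  rewrite (monof_upd _ lt) eqxx; congr (_ * _); apply: monof_ext => i0 _.
  by rewrite /f0; case: (i0 == j).
rewrite monofD; ring.
Qed.

Lemma W_pow N f' : (deg G f' <= N)%N -> W (1 + N * K) (h ^+ N * monof G f').
Proof.
elim: N f' => [|N IH] f' hd.
  have -> : monof G f' = 1.
    rewrite -(monof0 G); apply: monof_ext => i lt; apply/eqP; rewrite -leqn0.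
    apply: leq_trans hd; rewrite /deg big_mkord (bigD1 (Ordinal lt)) //= leq_addr //.
  rewrite expr0 mul1r; apply: spn1; exists (fun _ => 0%N), (fun _ => 0%N); split => //.
  by rewrite !monof0 mulr1.
have [[j [lt pos]]|none] := classic (exists j, (j < size G)%N /\ (0 < f' j)%N).
  pose f'' := fun i => if i == j then (f' j).-1 else f' i.
  have hd' : (deg G f'' <= N)%N.
    suff e : deg G f' = (deg G f'').+1 by move: hd; rewrite e ltnS.
    rewrite /deg !big_mkord (bigD1 (Ordinal lt)) //= [in RHS](bigD1 (Ordinal lt)) //=.
    rewrite /f'' eqxx -{1}(prednK pos) addSn; congr (_ + _).+1; apply: eq_bigr => i ne.
    have -> : (val i == j) = false; last by [].
    by apply/negbTE; apply: contra ne => /eqP e; apply/eqP/val_inj.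
  have -> : h ^+ N.+1 * monof G f' = h * G`_j * (h ^+ N * monof G f'').
    rewrite (monof_upd _ lt) [monof G f''](monof_upd _ lt) /f'' eqxx.
    have -> : monof G (fun i => if i == j then 0%N else if i == j then (f' j).-1 else f' i) =
              monof G (fun i => if i == j then 0%N else f' i).
      by apply: monof_ext => i _; case: (i == j).
    rewrite -{1}(prednK pos) !exprS; ring.
  have := W_red lt (IH _ hd'); congr (W _ _); lia.
have -> : monof G f' = 1.
  rewrite -(monof0 G); apply: monof_ext => i lt; apply/eqP; rewrite -leqn0 leqNgt.
  by apply/negP => p; apply: none; exists i.
rewrite mulr1 exprS mulSn addnCA addnC; apply: W_h.
have := IH (fun _ => 0%N); rewrite monof0 mulr1 addnC; apply.
by rewrite /deg big1.
Qed.

End Core2.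
Lemma leq_expb m n e : (m <= n)%N -> (m ^ e <= n ^ e)%N.
Proof. by move=> le; elim: e => [|e IH] //; rewrite !expnS leq_mul. Qed.

Lemma count_ineq a q r d K E : (a < r)%N -> (0 < E)%N ->
  ((1 + d * ((1 + d * r * K) ^ a * E ^ q + 1) * r * K) ^ a * E ^ q <
   ((1 + d * r * K) ^ a * E ^ q + 1) ^ r)%N.
Proof.
move=> ar E0; set C := (1 + d * r * K)%N; set B := (C ^ a * E ^ q + 1)%N.
have B0 : (0 < B)%N by rewrite /B addn1.
have T_le : (1 + d * B * r * K <= C * B)%N.
  rewrite /C mulnDl mul1n; apply: leq_add => //.
  by rewrite -!mulnA leq_mul2l (mulnC B) -!mulnA leq_mul2l mulnC leqnn !orbT.
apply: leq_trans (leq_pexp2l B0 ar); rewrite expnS.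
apply: leq_ltn_trans (leq_mul (leq_expb a T_le) (leqnn (E ^ q))) _.
rewrite expnMn mulnAC ltn_pmul2r ?expn_gt0 ?B0 //.
by rewrite /B addn1 ltnS.
Qed.

Section Core3.
Variables (k : fieldType) (D : idomainType) (iota : {rmorphism k -> D}).
Local Notation spn := (spn iota).
Local Notation Ind := (Ind iota).
Local Notation Poly := (Poly iota).
Implicit Types (s G u : seq D) (h g v z a : D).

Lemma Gmon_mono G d d' v : (d <= d')%N -> spn (Gmon G d) v -> spn (Gmon G d') v.
Proof. by move=> le; apply: spn_sub => z [f [hf ->]]; exists f; split => //; apply: leq_trans le. Qed.

Lemma degD G f f' : deg G (fun i => f i + f' i)%N = (deg G f + deg G f')%N.
Proof. by rewrite /deg big_split. Qed.

Lemma GmonM G d1 d2 a b : spn (Gmon G d1) a -> spn (Gmon G d2) b -> spn (Gmon G (d1 + d2)) (a * b).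
Proof.
move=> ha hb; apply: spnM ha hb => p q [f [hf ->]] [f' [hf' ->]]; apply: spn1.
by exists (fun i => f i + f' i)%N; rewrite degD monofD; split => //; apply: leq_add.
Qed.

Lemma Gmon1 G : spn (Gmon G 0) 1.
Proof. by apply: spn1; exists (fun _ => 0%N); rewrite monof0 /deg big1. Qed.

Lemma GmonX G d a n : spn (Gmon G d) a -> spn (Gmon G (d * n)) (a ^+ n).
Proof.
move=> ha; elim: n => [|n IH]; first by rewrite muln0 expr0; apply: Gmon1.
by rewrite exprS mulnS; apply: GmonM.
Qed.

Lemma Poly_ksub G z : ksubalg_gen iota G z -> Poly G z.
Proof.
apply.
- split.
  + by exists 0%N; apply: spn0.
  + by exists 0%N; apply: Gmon1.
  + move=> x y [d1 h1] [d2 h2]; exists (d1 + d2)%N; apply: spnB.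
    * by apply: Gmon_mono h1; apply: leq_addr.
    * by apply: Gmon_mono h2; apply: leq_addl.
  + by move=> x y [d1 h1] [d2 h2]; exists (d1 + d2)%N; apply: GmonM.
- move=> a [[c ->]|aG].
    exists 0%N; rewrite -[iota c]mulr1 -[_ * 1]addr0; apply: spnS; last exact: spn0.
    by exists (fun _ => 0%N); rewrite monof0 /deg big1.
  have lt : (index a G < size G)%N by rewrite index_mem.
  exists 1%N; apply: spn1; exists (fun i => (i == index a G) : nat).
  rewrite monof_unit // nth_index //; split => //.
  by rewrite /deg big_mkord (bigD1 (Ordinal lt)) //= eqxx big1 // => i ne; apply/eqP; rewrite eqb0; apply: contra ne => /eqP e; apply/eqP/val_inj.
Qed.

Lemma Poly_unif G u : (forall z, z \in u -> Poly G z) ->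
  exists d, forall z, z \in u -> spn (Gmon G d) z.
Proof.
elim: u => [|x u IH] H; first by exists 0%N.
have [d hd] := IH (fun z zu => H z ltac:(by rewrite inE zu orbT)).
have [d1 hd1] := H x (mem_head _ _).
exists (d + d1)%N => z; rewrite inE => /orP [/eqP ->|zu].
  by apply: Gmon_mono hd1; apply: leq_addl.
by apply: Gmon_mono (hd _ zu); apply: leq_addr.
Qed.

Lemma core s G u : (forall g, g \in G -> algo iota s g) ->
  (forall z, z \in u -> Poly G z) -> Ind u -> (size u <= size s)%N.
Proof.
move=> halg hP hI; rewrite leqNgt; apply/negP => ltsu.
have [h [E [hn0 hX E0 hG]]] := uniformize halg.
have [K [hK hrel]] := uniform_bnd hX hG.
have hrel' : forall j, (j < size G)%N -> relb iota s K E G`_j h.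
  by move=> j lt; apply: hrel; rewrite mem_nth.
have [d hd] := Poly_unif hP.
set r := size u; set a := size s; set q := size G.
set C := (1 + d * r * K)%N; set B := (C ^ a * E ^ q + 1)%N.
set N := (d * B * r)%N; set T := (1 + N * K)%N.
have hmono : forall b, b \in boxes r B -> spn (Gmon G N) (mono u b).
  move=> b; rewrite mem_boxes => /andP [/eqP sb ab].
  suff H : forall n, (n <= r)%N -> spn (Gmon G (d * B * n)) (\prod_(0 <= l < n) u`_l ^+ nth 0%N b l).
    exact: H.
  elim=> [|n IH] ln; first by rewrite big_nil muln0; apply: Gmon1.
  rewrite big_nat_recr //= mulnS addnC; apply: GmonM; first exact: IH (ltnW ln).
  apply: Gmon_mono (GmonX (nth 0%N b n) (hd _ (mem_nth 0 ln))).
  apply: leq_mul => //; apply: ltnW.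
  by apply: (allP ab); rewrite mem_nth // sb.
pose ws := [seq monof s (nth 0%N x) * monof G (nth 0%N y) | x <- boxes a T, y <- boxes q E].
have hW : forall b, b \in boxes r B -> spn (fun z => z \in ws) (h ^+ N * mono u b).
  move=> b bb; apply: spn_mulL (hmono b bb) => z [f' [hf' ->]].
  apply: spn_sub (W_pow hK E0 hrel' hf') => z' [f [f'' [hf hf'' ->]]].
  apply/allpairsP; exists (mkseq f a, mkseq f'' q); split => /=.
  - rewrite mem_boxes size_mkseq eqxx /=; apply/allP => x /mapP [i]; rewrite mem_iota => /andP [_ li] ->.
    exact: hf.
  - rewrite mem_boxes size_mkseq eqxx /=; apply/allP => x /mapP [i]; rewrite mem_iota => /andP [_ li] ->.
    exact: hf''.
  by congr (_ * _); apply: monof_ext => i li; rewrite nth_mkseq.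
have lt : (size ws < size (boxes r B))%N.
  rewrite size_allpairs !size_boxes.
  exact: count_ineq.
have [c [[b0 b0L cb0] hsum]] := steinitz (uniq_boxes r B) lt hW.
have : \sum_(b <- boxes r B) iota (c b) * mono u b = 0.
  have e : h ^+ N * (\sum_(b <- boxes r B) iota (c b) * mono u b) = 0.
    by rewrite mulr_sumr -[RHS]hsum; apply: eq_bigr => b _; ring.
  by move/eqP: e; rewrite mulf_eq0 expf_eq0 (negbTE hn0) andbF /= => /eqP.
move=> rel; have szb : forall b, b \in boxes r B -> size b = size u.
  by move=> b; rewrite mem_boxes => /andP [/eqP -> _].
by move: cb0; rewrite (hI _ c (uniq_boxes r B) szb rel _ b0L) eqxx.
Qed.

End Core3.
Section Basis.
Variables (k : fieldType) (D : idomainType) (iota : {rmorphism k -> D}).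
Local Notation spn := (spn iota).
Local Notation Ind := (Ind iota).
Local Notation XS := (XS iota).
Local Notation algo := (algo iota).
Implicit Types (s G u w : seq D) (h v z a : D).

Lemma XS_cons s a p : XS s p -> XS (a :: s) p.
Proof.
apply: spn_sub => z [f ->]; exists (fun i => if i is i'.+1 then f i' else 0%N).
by rewrite monof_cons expr0 mul1r.
Qed.

Lemma algo_cons s a g : algo s g -> algo (a :: s) g.
Proof.
move=> [h [E [hn0 [hX hr]]]]; exists h, E; split => //; split; first exact: XS_cons.
by apply: spn_sub hr => z [p [i [hp [hi ->]]]]; exists p, i; split => //; apply: XS_cons.
Qed.

Lemma XS_mem s g : g \in s -> XS s g.
Proof.
move=> gs; apply: spn1; exists (fun i => (i == index g s) : nat).
by rewrite monof_unit ?index_mem // nth_index.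
Qed.

Lemma algo_mem s g : g \in s -> algo s g.
Proof.
move=> gs; exists 1, 1%N; split; first exact: oner_neq0.
split; first exact: XS1.
by apply: spn1; exists g, 0%N; split; [exact: XS_mem|split => //]; rewrite mul1r expr1 expr0 mulr1.
Qed.

Definition isComb s P := exists L (c : seq nat -> k), [/\ uniq L,
  (forall g, g \in L -> size g = size s) & P = \sum_(g <- L) iota (c g) * mono s g].

Lemma isComb_XS s P : isComb s P -> XS s P.
Proof.
move=> [L [c [_ _ ->]]]; apply: spn_sum => g _; apply: spnZ; apply: spn1.
by exists (nth 0%N g).
Qed.

Lemma notInd s : ~ Ind s -> exists L (c : seq nat -> k), [/\ uniq L,
  (forall g, g \in L -> size g = size s),
  \sum_(g <- L) iota (c g) * mono s g = 0 & exists2 g, g \in L & c g != 0].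
Proof.
move=> nI; apply: NNPP => H; apply: nI => L c uL sz rel g gL.
apply: NNPP => ne; apply: H; exists L, c; split => //; exists g => //; exact/eqP.
Qed.

Lemma mono_cons a s x g : mono (a :: s) (x :: g) = a ^+ x * mono s g.
Proof. by rewrite /mono monof_cons. Qed.

Lemma split_head s a : Ind s -> ~ Ind (a :: s) ->
  exists B (P : nat -> D), [/\ forall i, isComb s (P i),
    \sum_(i < B) P i * a ^+ i = 0 & exists2 i, (i < B)%N & P i != 0].
Proof.
move=> hI /notInd [L [c [uL sz rel [g0 g0L cg0]]]].
pose B := (\sum_(g <- L) head 0%N g).+1.
have hB : forall g, g \in L -> (head 0%N g < B)%N.
  move=> g gL; rewrite ltnS /B (big_rem g) //=; exact: leq_addr.
pose P i := \sum_(g <- L | head 0%N g == i) iota (c g) * mono s (behead g).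
have hsz : forall g, g \in L -> g = head 0%N g :: behead g.
  by move=> g gL; move: (sz g gL); case: g gL.
have comb : forall i, P i = \sum_(g <- [seq behead g | g <- L & head 0%N g == i]) iota (c (i :: g)) * mono s g.
  move=> i; rewrite big_map big_filter /P big_seq_cond [RHS]big_seq_cond; apply: eq_bigr => g /andP [gL /eqP hi].
  by rewrite -hi -hsz.
have uLi : forall i, uniq [seq behead g | g <- L & head 0%N g == i].
  move=> i; rewrite map_inj_in_uniq ?filter_uniq // => x y.
  rewrite !mem_filter => /andP [/eqP hx xL] /andP [/eqP hy yL] e.
  by rewrite (hsz _ xL) (hsz _ yL) hx hy e.
have szi : forall i g, g \in [seq behead g | g <- L & head 0%N g == i] -> size g = size s.
  move=> i g /mapP [g']; rewrite mem_filter => /andP [_ g'L] ->.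
  by rewrite size_behead sz.
exists B, P; split.
- by move=> i; exists [seq behead g | g <- L & head 0%N g == i], (fun g => c (i :: g)); split; [exact: uLi | exact: szi | exact: comb].
- rewrite -[RHS]rel.
  transitivity (\sum_(i < B) \sum_(g <- L | head 0%N g == i) iota (c g) * mono (a :: s) g).
    apply: eq_bigr => i _; rewrite /P big_distrl /= big_seq_cond [RHS]big_seq_cond.
    apply: eq_bigr => g /andP [gL /eqP hi]; rewrite [in RHS](hsz _ gL) mono_cons -hi -(hsz _ gL); ring.
  under eq_bigr => i _ do rewrite big_mkcond.
  rewrite exchange_big /= big_seq [RHS]big_seq; apply: eq_bigr => g gL.
  rewrite (bigD1 (Ordinal (hB g gL))) //= eqxx big1 ?addr0 // => i ne.
  by case: eqP => // e; case/negP: ne; apply/eqP/val_inj.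
- apply: NNPP => H; move: cg0; have hi0 := hB g0 g0L.
  have P0 : P (head 0%N g0) = 0.
    by apply: NNPP => ne; apply: H; exists (head 0%N g0) => //; apply/eqP.
  move: P0; rewrite comb => P0.
  have := hI _ _ (uLi _) (szi _) P0 (behead g0).
  rewrite -hsz // => -> //; first by rewrite eqxx.
  by apply/mapP; exists g0 => //; rewrite mem_filter eqxx.
Qed.

Lemma dep_algo s a : Ind s -> ~ Ind (a :: s) -> algo s a.
Proof.
move=> hI nI; have [B [P [hc hsum [i0 i0B Pi0]]]] := split_head hI nI.
have ex : exists i, (i < B)%N && (P i != 0) by exists i0; rewrite i0B.
have bnd : forall i, (i < B)%N && (P i != 0) -> (i <= B)%N by move=> i /andP [/ltnW].
case: (ex_maxnP ex bnd) => E /andP [EB PE] maxE.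
exists (P E), E; split => //; split; first exact: isComb_XS.
have rel : P E * a ^+ E = \sum_(0 <= i < E) (- P i) * a ^+ i.
  have h1 := hsum; rewrite -(big_mkord xpredT (fun i => P i * a ^+ i)) in h1.
  rewrite (big_cat_nat (leq0n E) (ltnW EB)) /= (big_ltn EB) in h1.
  rewrite [X in _ + (_ + X)]big1_seq ?addr0 in h1; last first.
    move=> i /andP [_]; rewrite mem_index_iota => /andP [Ei iB].
    case: (eqVneq (P i) 0) => [->|ne]; first by rewrite mul0r.
    by have := maxE i; rewrite iB ne => /(_ isT); rewrite leqNgt Ei.
  move: h1.
  move/eqP; rewrite addrC addr_eq0 => /eqP ->; rewrite -sumrN; apply: eq_bigr => i _.
  by rewrite mulNr.
rewrite /alg_rel rel; apply: spn_sum => i; rewrite mem_index_iota => /andP [_ iE].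
apply: spn1; exists (- P i), i; split => //; apply: spnN; exact: isComb_XS.
Qed.

Lemma Ind_nil : Ind [::].
Proof.
move=> L c uL sz rel g gL.
have g0 : g = [::] by apply/eqP; rewrite -size_eq0 sz.
move: rel; rewrite (bigD1_seq g) //= big_seq_cond big1 ?addr0; last first.
  move=> g' /andP [g'L ne]; case/negP: ne; apply/eqP.
  by rewrite g0; apply/eqP; rewrite -size_eq0 sz.
rewrite /mono /monof big_nil mulr1 => /eqP; rewrite fmorph_eq0 => /eqP //.
Qed.

Definition isBasis G s := [/\ Ind s, forall z, z \in s -> z \in G & forall g, g \in G -> algo s g].

Lemma basis_exists G : exists s, isBasis G s /\ (size s <= size G)%N.
Proof.
elim: G => [|g G [s [[hI hsG halg] hsz]]].
  by exists [::]; split => //; split => //; exact: Ind_nil.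
case: (classic (Ind (g :: s))) => hg.
  exists (g :: s); split; last by rewrite /= ltnS.
  split => //.
    by move=> z; rewrite !inE => /orP [->|/hsG ->] //; rewrite orbT.
  move=> g'; rewrite inE => /orP [/eqP ->|g'G]; first by apply: algo_mem; rewrite mem_head.
  exact: algo_cons (halg _ g'G).
exists s; split; last by apply: leq_trans hsz _.
split => //; first by move=> z /hsG zG; rewrite inE zG orbT.
move=> g'; rewrite inE => /orP [/eqP ->|g'G]; last exact: halg.
exact: dep_algo.
Qed.

End Basis.
Section Sig.
Variables (k : fieldType) (sigk : {rmorphism k -> k}) (D : idomainType)
  (iota : {rmorphism k -> D}) (sig : {rmorphism D -> D})
  (hext : forall c : k, sig (iota c) = iota (sigk c)).
Local Notation spn := (spn iota).
Local Notation Ind := (Ind iota).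
Local Notation isComb := (isComb iota).
Implicit Types (s G u w : seq D) (h v z a : D).

Lemma mono_map s g : mono (map sig s) g = sig (mono s g).
Proof. by rewrite /mono monof_map. Qed.

Lemma sig_comb s L (c : seq nat -> k) :
  sig (\sum_(g <- L) iota (c g) * mono s g) = \sum_(g <- L) iota (sigk (c g)) * mono (map sig s) g.
Proof. by rewrite rmorph_sum; apply: eq_bigr => g _; rewrite rmorphM hext mono_map. Qed.

Lemma Ind_map_back s : Ind (map sig s) -> Ind s.
Proof.
move=> hI L c uL sz rel g gL.
have := hI L (fun g => sigk (c g)) uL; rewrite size_map => /(_ sz).
rewrite -sig_comb rel rmorph0 => /(_ erefl g gL) /eqP.
by rewrite fmorph_eq0 => /eqP.
Qed.

Lemma comb_sig_zero w P : Ind (map sig w) -> isComb w P -> sig P = 0 -> P = 0.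
Proof.
move=> hI [L [c [uL sz ->]]] hs; apply: big1_seq => g /andP [_ gL].
have := hI L (fun g => sigk (c g)) uL; rewrite size_map => /(_ sz).
rewrite -sig_comb hs => /(_ erefl g gL) /eqP; rewrite fmorph_eq0 => /eqP ->.
by rewrite rmorph0 mul0r.
Qed.

Lemma subring_gen_sub (A : D -> Prop) : is_subring (subring_gen A).
Proof.
split.
- by move=> S [].
- by move=> S [].
- by move=> x y hx hy S hS hA; case: (hS) => _ _ hB _; apply: hB; [apply: hx|apply: hy].
- by move=> x y hx hy S hS hA; case: (hS) => _ _ _ hM; apply: hM; [apply: hx|apply: hy].
Qed.

Lemma subring_gen_in (A : D -> Prop) x : A x -> subring_gen A x.
Proof. by move=> Ax S _ hA; apply: hA. Qed.

Lemma ksub_map G z : ksubalg_gen iota G z -> ksubalg_gen iota (map sig G) (sig z).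
Proof.
move=> hz; apply: (hz (fun x => ksubalg_gen iota (map sig G) (sig x))).
- have [h0 h1 hB hM] := subring_gen_sub (fun x => (exists c, x = iota c) \/ x \in map sig G).
  split; rewrite /= ?rmorph0 ?rmorph1 //.
  + by move=> x y hx hy; rewrite rmorphB; apply: hB.
  + by move=> x y hx hy; rewrite rmorphM; apply: hM.
- move=> a [[c ->]|aG]; apply: subring_gen_in.
    by left; exists (sigk c); rewrite hext.
  by right; apply: map_f.
Qed.

Lemma sig_basis H s s' : isBasis iota H s -> isBasis iota (map sig H) s' ->
  (size s' <= size s)%N /\
  ((exists z, [/\ ksubalg_gen iota H z, z != 0 & sig z = 0]) -> (size s' < size s)%N).
Proof.
move=> [hI hsH halg] [hI' hs'H halg'].
pose w := [seq nth 0 H (index x (map sig H)) | x <- s'].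
have hw : map sig w = s'.
  rewrite -map_comp -[RHS]map_id; apply/eq_in_map => x xs /=.
  have xm := hs'H x xs; have lt : (index x (map sig H) < size H)%N by rewrite -(size_map sig) index_mem.
  by rewrite -(nth_map 0 0) // nth_index.
have wH : forall z, z \in w -> z \in H.
  by move=> z /mapP [x xs ->]; apply: mem_nth; rewrite -(size_map sig) index_mem; apply: hs'H.
have hIw : Ind w by apply: Ind_map_back; rewrite hw.
have szw : size w = size s' by rewrite size_map.
have PolyH : forall z, ksubalg_gen iota H z -> Poly iota H z by move=> z; apply: Poly_ksub.
have inH : forall z, z \in H -> ksubalg_gen iota H z.
  by move=> z zH; apply: subring_gen_in; right.
have le : (size w <= size s)%N.
  by apply: core halg _ hIw => z zw; apply: PolyH; apply: inH; apply: wH.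
split; first by rewrite -szw.
move=> [z [zH zn0 sz0]]; rewrite ltn_neqAle -szw le andbT; apply/negP => /eqP e.
have nI : ~ Ind (z :: w).
  move=> hI2; have : (size (z :: w) <= size s)%N.
    apply: core halg _ hI2 => x; rewrite inE => /orP [/eqP ->|xw]; first exact: PolyH.
    by apply: PolyH; apply: inH; apply: wH.
  by rewrite /= -e ltnn.
have [B [P [hc hsum [i1 i1B Pi1]]]] := split_head hIw nI.
have ex : exists i, (i < B)%N && (P i != 0) by exists i1; rewrite i1B.
case: (ex_minnP ex) => i0 /andP [i0B Pi0] minI.
apply/negP: Pi0; rewrite negbK; apply/eqP; apply: (comb_sig_zero _ (hc i0)); first by rewrite hw.
have hsum' : \sum_(i0 <= i < B) P i * z ^+ i = 0.
  rewrite -[RHS]hsum -(big_mkord xpredT (fun i => P i * z ^+ i)) (big_cat_nat (leq0n i0) (ltnW i0B)) /=.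
  symmetry; rewrite big1_seq ?add0r // => i /andP [_]; rewrite mem_index_iota => /andP [_ ii0].
  case: (eqVneq (P i) 0) => [->|ne]; first by rewrite mul0r.
  by have := minI i; rewrite (ltn_trans ii0 i0B) ne => /(_ isT); rewrite leqNgt ii0.
have hQ : \sum_(i0 <= i < B) P i * z ^+ (i - i0) = 0.
  have eQ : z ^+ i0 * (\sum_(i0 <= i < B) P i * z ^+ (i - i0)) = 0.
    rewrite -[RHS]hsum' mulr_sumr; apply: eq_big_nat => i /andP [ii _].
    by rewrite mulrCA -exprD subnKC.
  by move/eqP: eQ; rewrite mulf_eq0 expf_eq0 (negbTE zn0) andbF /= => /eqP.
have := congr1 sig hQ; rewrite rmorph0 rmorph_sum (big_ltn i0B) /= subnn expr0 mulr1.
rewrite big_nat_cond big1 ?addr0 // => i /andP [/andP [ii _] _].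
by rewrite rmorphM rmorphXn sz0 expr0n subn_eq0 leqNgt ii /= mulr0.
Qed.

End Sig.
Section Gen.
Variables (k : fieldType) (sigk : {rmorphism k -> k}) (D : idomainType)
  (iota : {rmorphism k -> D}) (sig : {rmorphism D -> D})
  (hext : forall c : k, sig (iota c) = iota (sigk c)).
Implicit Types (s G u w : seq D) (h v z a x y : D).

Lemma iterB j x y : iter j sig (x - y) = iter j sig x - iter j sig y.
Proof. by elim: j => [|j IH] //=; rewrite IH rmorphB. Qed.
Lemma iterM j x y : iter j sig (x * y) = iter j sig x * iter j sig y.
Proof. by elim: j => [|j IH] //=; rewrite IH rmorphM. Qed.
Lemma iter1 j : iter j sig 1 = 1.
Proof. by elim: j => [|j IH] //=; rewrite IH rmorph1. Qed.
Lemma iter0 j : iter j sig 0 = 0.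
Proof. by elim: j => [|j IH] //=; rewrite IH rmorph0. Qed.
Lemma iter_iota j c : iter j sig (iota c) = iota (iter j sigk c).
Proof. by elim: j => [|j IH] //=; rewrite IH hext. Qed.

Lemma ksub_mono G G' z : (forall x, x \in G -> x \in G') ->
  ksubalg_gen iota G z -> ksubalg_gen iota G' z.
Proof.
move=> sub hz; apply: hz; first exact: subring_gen_sub.
by move=> a [[c ->]|aG]; apply: subring_gen_in; [left; exists c|right; apply: sub].
Qed.

Lemma ksub_iter j G z : ksubalg_gen iota G z ->
  ksubalg_gen iota (map (iter j sig) G) (iter j sig z).
Proof.
elim: j => [|j IH] hz /=.
  by apply: ksub_mono hz => x xG; rewrite map_id_in.
have -> : map (fun x => sig (iter j sig x)) G = map sig (map (iter j sig) G) by rewrite -map_comp.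
by apply: (ksub_map hext); apply: IH.
Qed.

Lemma ksub_mem G x : x \in G -> ksubalg_gen iota G x.
Proof. by move=> xG; apply: subring_gen_in; right. Qed.

Variables (R : D -> Prop) (g : seq D) (hRg : forall x, R x <-> ksubalg_gen iota g x)
  (hD : forall x, dsubring_gen sig R x).

Definition Gm m := flatten [seq map (iter j sig) g | j <- seq.iota 0 m].

Lemma mem_Gm m x : x \in Gm m -> exists j y, [/\ (j < m)%N, y \in g & x = iter j sig y].
Proof.
case/flattenP => t /mapP [j]; rewrite mem_iota add0n => /andP [_ jm] -> /mapP [y yg ->].
by exists j, y.
Qed.

Lemma Gm_mem m j y : (j < m)%N -> y \in g -> iter j sig y \in Gm m.
Proof.
move=> jm yg; apply/flattenP; exists (map (iter j sig) g); last exact: map_f.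
by apply/mapP; exists j => //; rewrite mem_iota add0n.
Qed.

Lemma Gm_mono m m' : (m <= m')%N -> forall x, x \in Gm m -> x \in Gm m'.
Proof.
move=> le x /mem_Gm [j [y [jm yg ->]]]; apply: Gm_mem => //; exact: leq_trans jm le.
Qed.

Lemma Gm_split m n x : x \in Gm (m + n) -> x \in Gm n ++ map (iter n sig) (Gm m).
Proof.
move=> /mem_Gm [j [y [jm yg ->]]]; rewrite mem_cat.
case: (ltnP j n) => jn; first by rewrite Gm_mem.
apply/orP; right; apply/mapP; exists (iter (j - n) sig y).
  by apply: Gm_mem => //; rewrite ltn_subLR // addnC.
by rewrite -iterD subnKC.
Qed.

Lemma Rm_eq m x : (0 < m)%N -> Rm sig R m x <-> ksubalg_gen iota (Gm m) x.
Proof.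
move=> m0; split.
  move=> hx; apply: hx; first exact: subring_gen_sub.
  move=> a [j [jm [y [Ry ->]]]]; have := ksub_iter (j:=j) ((hRg y).1 Ry).
  by apply: ksub_mono => x' /mapP [y' y'g ->]; apply: Gm_mem.
move=> hx; apply: hx; first exact: subring_gen_sub.
move=> a [[c ->]|aG]; apply: subring_gen_in.
  exists 0%N; split => //; exists (iota c); split => //; apply/hRg.
  by apply: subring_gen_in; left; exists c.
have [j [y [jm yg ->]]] := mem_Gm aG.
exists j; split => //; exists y; split => //; apply/hRg; exact: ksub_mem.
Qed.

Lemma D_union x : exists m, (0 < m)%N /\ ksubalg_gen iota (Gm m) x.
Proof.
have H := hD x; rewrite /dsubring_gen in H.
apply: (H (fun x => exists m, (0 < m)%N /\ ksubalg_gen iota (Gm m) x)).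
- have [h0 h1 hB hM] := subring_gen_sub (fun x => (exists c, x = iota c) \/ x \in Gm 1).
  split.
  + by exists 1%N.
  + by exists 1%N.
  + move=> a b [m1 [m10 h1']] [m2 [m20 h2']]; exists (maxn m1 m2); split; first by rewrite leq_max m10.
    have [hh0 hh1 hhB hhM] := subring_gen_sub (fun x => (exists c, x = iota c) \/ x \in Gm (maxn m1 m2)).
    apply: hhB.
      by apply: ksub_mono h1'; apply: Gm_mono; rewrite leq_maxl.
    by apply: ksub_mono h2'; apply: Gm_mono; rewrite leq_maxr.
  + move=> a b [m1 [m10 h1']] [m2 [m20 h2']]; exists (maxn m1 m2); split; first by rewrite leq_max m10.
    have [hh0 hh1 hhB hhM] := subring_gen_sub (fun x => (exists c, x = iota c) \/ x \in Gm (maxn m1 m2)).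
    apply: hhM.
      by apply: ksub_mono h1'; apply: Gm_mono; rewrite leq_maxl.
    by apply: ksub_mono h2'; apply: Gm_mono; rewrite leq_maxr.
- move=> a Ra; exists 1%N; split => //; apply: ksub_mono ((hRg a).1 Ra).
  by move=> y yg; have := Gm_mem (ltn0Sn 0) yg.
- move=> y [m [m0 hy]]; exists m.+1; split => //.
  have := ksub_iter (j:=1) hy; apply: ksub_mono => x' /mapP [y' /mem_Gm [j [y'' [jm y''g ->]]] ->].
  exact: (Gm_mem (jm : (j.+1 < m.+1)%N) y''g).
Qed.

End Gen.
Section Dim.
Variables (k : fieldType) (sigk : {rmorphism k -> k}) (D : idomainType)
  (iota : {rmorphism k -> D}) (sig : {rmorphism D -> D})
  (hext : forall c : k, sig (iota c) = iota (sigk c)).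
Local Notation Ind := (Ind iota).
Local Notation XS := (XS iota).
Local Notation algo := (algo iota).
Implicit Types (s G u w t : seq D) (h v z a : D).

Lemma basis_le G s u : isBasis iota G s -> Ind u ->
  (forall z, z \in u -> ksubalg_gen iota G z) -> (size u <= size s)%N.
Proof.
move=> [_ _ halg] hI hu; apply: core halg _ hI => z zu; apply: Poly_ksub; exact: hu.
Qed.

Lemma basis_size G s s' : isBasis iota G s -> isBasis iota G s' -> size s = size s'.
Proof.
move=> hb hb'; case: (hb) => [hI hsG _]; case: (hb') => [hI' hs'G _].
apply/eqP; rewrite eqn_leq (basis_le hb' hI) ?(basis_le hb hI') //.
  by move=> z /hs'G; apply: ksub_mem.
by move=> z /hsG; apply: ksub_mem.
Qed.

Definition bas G : seq D :=
  proj1_sig (constructive_indefinite_description _ (basis_exists iota G)).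
Lemma bas_spec G : isBasis iota G (bas G).
Proof. by rewrite /bas; case: constructive_indefinite_description => s [] /=. Qed.
Definition dimG G := size (bas G).

Lemma monof_catr s t f : monof s f = monof (s ++ t) (fun i => if (i < size s)%N then f i else 0%N).
Proof.
rewrite /monof size_cat (big_cat_nat (leq0n (size s)) (leq_addr _ _)) /=.
rewrite [X in _ = _ * X]big1_seq ?mulr1; last first.
  by move=> i /andP [_]; rewrite mem_index_iota => /andP [si _]; rewrite ltnNge si expr0.
by apply: eq_big_nat => i /andP [_ lt]; rewrite nth_cat lt.
Qed.

Lemma XS_catr s t p : XS s p -> XS (s ++ t) p.
Proof. by apply: spn_sub => z [f ->]; eexists; apply: monof_catr. Qed.

Lemma XS_catl s t p : XS s p -> XS (t ++ s) p.
Proof. by elim: t => [|a t IH] //= hp; apply: XS_cons; apply: IH. Qed.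

Lemma algo_sub s s' y : (forall p, XS s p -> XS s' p) -> algo s y -> algo s' y.
Proof.
move=> sub [h [E [hn0 [hX hr]]]]; exists h, E; split => //; split; first exact: sub.
by apply: spn_sub hr => z [p [i [hp [hi ->]]]]; exists p, i; split => //; apply: sub.
Qed.

Lemma subadd G G1 G2 : (forall x, x \in G -> x \in G1 ++ G2) ->
  (dimG G <= dimG G1 + dimG G2)%N.
Proof.
move=> sub; rewrite /dimG -size_cat.
have [hI hsG _] := bas_spec G.
have halg : forall y, y \in G1 ++ G2 -> algo (bas G1 ++ bas G2) y.
  move=> y; rewrite mem_cat => /orP [yG|yG].
    by case: (bas_spec G1) => _ _ /(_ y yG); apply: algo_sub => p; apply: XS_catr.
  by case: (bas_spec G2) => _ _ /(_ y yG); apply: algo_sub => p; apply: XS_catl.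
apply: core halg _ hI => z /hsG /sub zG; apply: Poly_ksub; exact: ksub_mem.
Qed.

Lemma dim_sig H : (dimG (map sig H) <= dimG H)%N /\
  ((exists z, [/\ ksubalg_gen iota H z, z != 0 & sig z = 0]) -> (dimG (map sig H) < dimG H)%N).
Proof. exact: (sig_basis hext (bas_spec H) (bas_spec (map sig H))). Qed.

Lemma Ind_take s r : Ind s -> Ind (take r s).
Proof.
move=> hI L c uL sz rel g gL.
set r' := size (take r s).
have r's : (r' <= size s)%N by rewrite /r' size_take; case: ltnP => [/ltnW|].
pose ext (y : seq nat) := y ++ nseq (size s - r') 0%N.
have monoext : forall y, size y = r' -> mono s (ext y) = mono (take r s) y.
  move=> y sy; rewrite /mono /monof -/r' (big_cat_nat (leq0n r') r's) /=.
  rewrite [X in _ * X = _]big1_seq ?mulr1; last first.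
    move=> i /andP [_]; rewrite mem_index_iota => /andP [ri _].
    by rewrite /ext nth_cat sy ltnNge ri /= nth_nseq if_same expr0.
  apply: eq_big_nat => i /andP [_ lt]; rewrite /ext nth_cat sy lt nth_take //.
  move: lt; rewrite /r' size_take; case: (ltnP r (size s)) => h1 h2; lia.
have := hI [seq ext y | y <- L] (fun y => c (take r' y)).
rewrite map_inj_in_uniq //; last first.
  move=> x y xL yL e; have := congr1 (take r') e.
  by rewrite /ext !take_size_cat ?sz.
move=> /(_ uL) H.
have szs : forall y, y \in [seq ext y | y <- L] -> size y = size s.
  by move=> y /mapP [y' y'L ->]; rewrite size_cat size_nseq sz // subnKC.
have rel' : \sum_(j <- [seq ext y | y <- L]) iota (c (take r' j)) * mono s j = 0.
  rewrite big_map -[RHS]rel big_seq [RHS]big_seq; apply: eq_bigr => y yL.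
  by rewrite /ext take_size_cat ?sz // monoext ?sz.
have := H szs rel' (ext g) (map_f _ gL).
by rewrite /ext take_size_cat ?sz.
Qed.

Lemma fam_seq t n (e : size t = n) : fam (fun i : 'I_n => t`_i) = t.
Proof.
apply: (@eq_from_nth _ 0); first by rewrite size_fam.
move=> i; rewrite size_fam => lt; have := nth_fam (fun i : 'I_n => t`_i) (Ordinal lt).
by move=> /= ->.
Qed.

Lemma trdeg_link (S : D -> Prop) G d : (forall x, S x <-> ksubalg_gen iota G x) ->
  trdeg_eq iota S d -> d = dimG G.
Proof.
move=> hS [[x [hx hai]] hno]; apply/eqP; rewrite eqn_leq.
have hb := bas_spec G.
apply/andP; split.
  have := basis_le hb (alg_indep_Ind hai); rewrite size_fam; apply.
  by move=> z /mapP [i _ ->]; apply/hS.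
rewrite leqNgt; apply/negP => lt.
pose t := take d.+1 (bas G).
have st : size t = d.+1 by rewrite size_takel.
apply: (hno (fun i : 'I_d.+1 => t`_i)).
  move=> i; apply/hS; case: hb => _ hsG _; apply: ksub_mem; apply: hsG.
  by rewrite /t nth_take //; apply: mem_nth; apply: leq_trans lt.
apply: Ind_alg_indep; rewrite fam_seq //; apply: Ind_take; by case: hb.
Qed.

End Dim.
Section Final.
Variables (k : fieldType) (sigk : {rmorphism k -> k}) (D : idomainType)
  (iota : {rmorphism k -> D}) (sig : {rmorphism D -> D})
  (hext : forall c : k, sig (iota c) = iota (sigk c)).
Variables (R : D -> Prop) (g : seq D) (hRg : forall x, R x <-> ksubalg_gen iota g x)
  (hD : forall x, dsubring_gen sig R x).

Local Notation Gm := (Gm sig g).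
Definition cd m := dimG iota (Gm m).

Lemma cd_link m d : (0 < m)%N -> trdeg_eq iota (Rm sig R m) d -> d = cd m.
Proof. by move=> m0; apply: trdeg_link => x; apply: Rm_eq. Qed.

Lemma cd_sub m n : (cd (m + n) <= cd n + dimG iota (map (iter n sig) (Gm m)))%N.
Proof. by apply: subadd => x; apply: Gm_split. Qed.

Definition hyp L := forall i, (i < L)%N -> exists z : D, iter i sig z != 0 /\ iter i.+1 sig z = 0.

Lemma chain m L : (forall i, (i < L)%N -> exists z, [/\ ksubalg_gen iota (Gm m) z,
    iter i sig z != 0 & iter i.+1 sig z = 0]) ->
  forall n, (L <= n)%N -> (dimG iota (map (iter n sig) (Gm m)) + L <= cd m)%N.
Proof.
move=> hw.
pose t j := dimG iota (map (iter j sig) (Gm m)).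
have t0 : t 0%N = cd m by rewrite /t map_id_in.
have step : forall j, (t j.+1 + minn j.+1 L <= t j + minn j L)%N.
  move=> j; have [le lt] := dim_sig hext (map (iter j sig) (Gm m)).
  have e : map sig (map (iter j sig) (Gm m)) = map (iter j.+1 sig) (Gm m) by rewrite -map_comp.
  rewrite e in le lt; rewrite -/(t j.+1) -/(t j) in le lt.
  case: (ltnP j L) => jL.
    have [z [zG zn0 z0]] := hw j jL.
    have := lt (ex_intro _ (iter j sig z) (And3 (ksub_iter hext (j:=j) zG) zn0 z0)).
    move: jL; clear; lia.
  move: jL le; clear; lia.
have all : forall j, (t j + minn j L <= t 0%N)%N.
  elim=> [|j IH]; first by rewrite min0n addn0.
  exact: leq_trans (step j) IH.
move=> n Ln; have := all n; rewrite t0 /t; move: Ln; clear; lia.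
Qed.

Lemma key L : hyp L -> exists m0, (0 < m0)%N /\
  forall m n, (m0 <= m)%N -> (L <= n)%N -> (cd (m + n) + L <= cd m + cd n)%N.
Proof.
move=> hL.
have [m0 [m00 hw]] : exists m0, (0 < m0)%N /\ forall i, (i < L)%N -> exists z, [/\ ksubalg_gen iota (Gm m0) z,
    iter i sig z != 0 & iter i.+1 sig z = 0].
  elim: L hL => [|L IH] hL; first by exists 1%N.
  have [m1 [m10 hw1]] := IH (fun i iL => hL i (ltnW iL)).
  have [z [zn0 z0]] := hL L (ltnSn L).
  have [m2 [m20 hz]] := D_union hext hRg hD z.
  exists (m1 + m2)%N; split; first by rewrite addn_gt0 m10.
  move=> i; rewrite ltnS leq_eqVlt => /orP [/eqP ->|iL].
    exists z; split => //; apply: ksub_mono hz; apply: Gm_mono; exact: leq_addl.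
  have [z' [hz' n' z'0]] := hw1 i iL; exists z'; split => //.
  by apply: ksub_mono hz'; apply: Gm_mono; exact: leq_addr.
exists m0; split => // m n m0m Ln.
have hw' : forall i, (i < L)%N -> exists z, [/\ ksubalg_gen iota (Gm m) z,
    iter i sig z != 0 & iter i.+1 sig z = 0].
  move=> i iL; have [z [hz zn0 z0]] := hw i iL; exists z; split => //.
  by apply: ksub_mono hz; apply: Gm_mono.
have := chain hw' Ln; have := cd_sub m n; lia.
Qed.

Lemma not_inj i : ~ inj_on_iter sig i -> exists z : D, iter i sig z != 0 /\ iter i.+1 sig z = 0.
Proof.
move=> ni; apply: NNPP => H; apply: ni => x y e.
apply: NNPP => ne; apply: H; exists (x - y); split.
  by rewrite iterB subr_eq0; apply/eqP.
by rewrite /= iterB rmorphB e subrr.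
Qed.

Lemma part1 : exists n, inj_on_iter sig n.
Proof.
apply: NNPP => H.
have hypL : forall L, hyp L.
  move=> L i _; apply: not_inj => hi; apply: H; by exists i.
have claim : forall j p, (j * p <= cd p)%N.
  elim=> [|j IH] p; first by rewrite mul0n.
  case: p => [|p]; first by rewrite muln0.
  have [m0 [m00 hk]] := key (hypL p.+1).
  have F : forall kk, (cd (m0 + kk * p.+1) + kk * p.+1 <= cd m0 + kk * cd p.+1)%N.
    elim=> [|kk IHk]; first by rewrite !mul0n !addn0.
    have := hk (m0 + kk * p.+1)%N p.+1 (leq_addr _ _) (leqnn _).
    rewrite !mulSn -addnA [(p.+1 + _)%N]addnC addnA.
    move: IHk; clear; lia.
  set kk := (cd m0).+1.
  have h1 := F kk; have h2 := IH (m0 + kk * p.+1)%N.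
  rewrite leqNgt; apply/negP => lt.
  have h3 : (kk * (cd p.+1).+1 <= kk * (j.+1 * p.+1))%N by rewrite leq_mul2l lt orbT.
  rewrite mulnS mulnCA mulSn in h3; rewrite mulnDr in h2.
  move: h1 h2 h3; rewrite /kk.
  move: (cd (m0 + (cd m0).+1 * p.+1)) ((cd m0).+1 * p.+1) (j * ((cd m0).+1 * p.+1)) ((cd m0).+1 * cd p.+1) (j * m0) => X A JA KC JM.
  clear; lia.
have := claim (cd 1).+1 1; rewrite muln1 ltnn //.
Qed.

Lemma part2 a b : dim_growth iota sig R a b -> exists n : nat, (n%:Z <= b) /\ inj_on_iter sig n.
Proof.
move=> [M hM].
have bound : forall L, hyp L -> (L%:Z <= b).
  move=> L hL; have [m0 [m00 hk]] := key hL.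
  set m := maxn m0 (maxn M 1); set n := maxn L (maxn M 1).
  have cval : forall x, (maxn M 1 <= x)%N -> (cd x)%:Z = a * x%:Z + b.
    move=> x; rewrite geq_max => /andP [Mx x1].
    have [d [hd e]] := hM x Mx; by rewrite -(cd_link x1 hd) e.
  have := hk m n (leq_maxl _ _) (leq_maxl _ _).
  rewrite -lez_nat !PoszD (cval m) ?(cval n) ?(cval (m + n)%N) ?leq_maxr //; last first.
    by apply: leq_trans (leq_maxr _ _) (leq_addr _ _).
  by rewrite PoszD mulrDr; lia.
have b0 : (0 <= b) by apply: (bound 0%N) => i.
have [bn eb] : exists bn : nat, b = bn%:Z by move: b0; case: (b) => [bn|] // _; exists bn.
apply: NNPP => H.
have : hyp bn.+1.
  move=> i iL; apply: not_inj => hi; apply: H; exists i; split => //.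
  by rewrite eb lez_nat -ltnS.
by move/bound; rewrite eb lez_nat ltnn.
Qed.

End Final.

Unset Implicit Arguments.

Theorem lemma4p10 (k : fieldType) (sigk : {rmorphism k -> k})
    (D : idomainType) (iota : {rmorphism k -> D}) (sig : {rmorphism D -> D})
    (hext : forall c : k, sig (iota c) = iota (sigk c))
    (hfg : exists R : D -> Prop, fg_ksubalg iota R /\
           forall x : D, dsubring_gen sig R x) :
  (exists n : nat, inj_on_iter sig n) /\
  (forall (R : D -> Prop), fg_ksubalg iota R ->
     (forall x : D, dsubring_gen sig R x) ->
     forall a b : int, dim_growth iota sig R a b ->
     exists n : nat, (n%:Z <= b) /\ inj_on_iter sig n).
Proof.
split.
  have [R [[g hg] hR]] := hfg; exact: (part1 hext hg hR).
move=> R [g hg] hR a b hab; exact: (part2 hext hg hR hab).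
Qed.
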